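(* Let $R$ be a von Neumann regular ring with $\omega(\Gamma'(R))<\infty$. Then $R\cong F_1\times\cdots\times F_n$ where each $F_i$ is a field and $n=|\mathrm{Min}(R)|$.
   Context: All rings are commutative with identity $1\ne 0$. $W^*(R)$ denotes the set of non-zero non-unit elements of $R$. The cozero-divisor graph $\Gamma'(R)$ is the simple graph with vertex set $W^*(R)$, in which distinct $a,b$ are adjacent iff $a\notin Rb$ and $b\notin Ra$. A ring $R$ is von Neumann regular if for every $r\in R$ there is $s\in R$ with $r=r^2s$. $\mathrm{Min}(R)$ is the set of minimal prime ideals of $R$. $\omega(G)$ is the clique number of $G$. *)

(* Defs.v *)
From HB Require Import structures.
From mathcomp Require Import all_boot all_order all_algebra.
Set Implicit Arguments. Unset Strict Implicit. Unset Printing Implicit Defensive.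
Import GRing.Theory.
Local Open Scope ring_scope.

(* units and principal ideals, stated as in the paper (no computable inverse needed) *)
Definition is_unit (R : comNzRingType) (a : R) : Prop := exists b : R, a * b = 1.

Definition in_principal (R : comNzRingType) (a b : R) : Prop := exists r : R, a = r * b.

Definition Wstar (R : comNzRingType) (a : R) : Prop := a <> 0 /\ ~ is_unit a.

Definition cozero_adj (R : comNzRingType) (a b : R) : Prop :=
  Wstar a /\ Wstar b /\ a <> b /\ ~ in_principal a b /\ ~ in_principal b a.

Definition cozero_clique (R : comNzRingType) (s : seq R) : Prop :=
  uniq s /\ (forall a, a \in s -> Wstar a) /\
  (forall a b, a \in s -> b \in s -> a <> b -> cozero_adj a b).

Definition finite_clique_number (R : comNzRingType) : Prop :=
  exists N : nat, forall s : seq R, cozero_clique s -> (size s <= N)%N.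

Definition von_neumann_regular (R : comNzRingType) : Prop :=
  forall r : R, exists s : R, r = r ^+ 2 * s.

Definition is_ideal (R : comNzRingType) (P : R -> Prop) : Prop :=
  P 0 /\ (forall x y, P x -> P y -> P (x + y)) /\ (forall r x, P x -> P (r * x)).

Definition is_prime_ideal (R : comNzRingType) (P : R -> Prop) : Prop :=
  is_ideal P /\ ~ P 1 /\ (forall a b, P (a * b) -> P a \/ P b).

Definition is_minimal_prime (R : comNzRingType) (P : R -> Prop) : Prop :=
  is_prime_ideal P /\
  (forall Q : R -> Prop, is_prime_ideal Q -> (forall x, Q x -> P x) ->
     forall x, P x -> Q x).

Definition same_set (T : Type) (A B : T -> Prop) : Prop := forall x, A x <-> B x.

(* |Min(R)| = n : Min(R) is in bijection with 'I_n (sets compared extensionally) *)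
Definition card_Min (R : comNzRingType) (n : nat) : Prop :=
  exists f : 'I_n -> (R -> Prop),
    (forall i, is_minimal_prime (f i)) /\
    (forall i j, same_set (f i) (f j) -> i = j) /\
    (forall P, is_minimal_prime P -> exists i, same_set (f i) P).

Definition ring_iso_prod (R : comNzRingType) (n : nat) (F : 'I_n -> fieldType)
  (phi : R -> forall i : 'I_n, F i) : Prop :=
  (forall x y, phi (x + y) = (fun i => phi x i + phi y i)) /\
  (forall x y, phi (x * y) = (fun i => phi x i * phi y i)) /\
  phi 1 = (fun i => 1) /\
  (forall x y, phi x = phi y -> x = y) /\
  (forall g : forall i : 'I_n, F i, exists x, phi x = g).

(* Main.v *)
Require Import Defs.
From HB Require Import structures.
From mathcomp Require Import all_boot all_order all_algebra ring.
From Stdlib Require Import ClassicalEpsilon FunctionalExtensionality.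
Set Implicit Arguments. Unset Strict Implicit. Unset Printing Implicit Defensive.
Import GRing.Theory.
Local Open Scope ring_scope.

Section FeSec.
Variables (R : comNzRingType) (e : R).
Hypothesis He : e * e = e.
Hypothesis Hne : e != 0.
Hypothesis Hinv : forall x : R, x * e = x -> x != 0 -> exists y : R, x * y = e.

Record Fe := MkFe { fval : R; fvalP : fval * e == fval }.
HB.instance Definition _ := [isSub for fval].
HB.instance Definition _ := [Choice of Fe by <:].

Lemma fe0P : (0 : R) * e == 0. Proof. by rewrite mul0r. Qed.
Lemma feaddP (x y : Fe) : (fval x + fval y) * e == fval x + fval y.
Proof. by rewrite mulrDl (eqP (fvalP x)) (eqP (fvalP y)). Qed.
Lemma feoppP (x : Fe) : (- fval x) * e == - fval x.
Proof. by rewrite mulNr (eqP (fvalP x)). Qed.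
Lemma fe1P : e * e == e. Proof. by rewrite He. Qed.
Lemma femulP (x y : Fe) : (fval x * fval y) * e == fval x * fval y.
Proof. by rewrite -mulrA (eqP (fvalP y)). Qed.

Definition fe0 := MkFe fe0P.
Definition feadd x y := MkFe (feaddP x y).
Definition feopp x := MkFe (feoppP x).
Definition fe1 := MkFe fe1P.
Definition femul x y := MkFe (femulP x y).

Lemma feaddA : associative feadd.
Proof. by move=> x y z; apply: val_inj; rewrite /= addrA. Qed.
Lemma feaddC : commutative feadd.
Proof. by move=> x y; apply: val_inj; rewrite /= addrC. Qed.
Lemma feadd0 : left_id fe0 feadd.
Proof. by move=> x; apply: val_inj; rewrite /= add0r. Qed.
Lemma feaddN : left_inverse fe0 feopp feadd.
Proof. by move=> x; apply: val_inj; rewrite /= addNr. Qed.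
HB.instance Definition _ := GRing.isZmodule.Build Fe feaddA feaddC feadd0 feaddN.

Lemma femulA : associative femul.
Proof. by move=> x y z; apply: val_inj; rewrite /= mulrA. Qed.
Lemma femulC : commutative femul.
Proof. by move=> x y; apply: val_inj; rewrite /= mulrC. Qed.
Lemma femul1 : left_id fe1 femul.
Proof. by move=> x; apply: val_inj; rewrite /= mulrC (eqP (fvalP x)). Qed.
Lemma femulD : left_distributive femul (@GRing.add Fe).
Proof. by move=> x y z; apply: val_inj; rewrite /= mulrDl. Qed.
Lemma fe1_neq0 : fe1 != (0 : Fe).
Proof. by apply/eqP => /(congr1 fval) /= /eqP; rewrite (negbTE Hne). Qed.
HB.instance Definition _ := GRing.Zmodule_isComNzRing.Build Fe femulA femulC femul1 femulD fe1_neq0.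

Definition feinv_val (x : Fe) : R :=
  match excluded_middle_informative (exists y : R, fval x * y = e) with
  | left H => proj1_sig (constructive_indefinite_description _ H) * e
  | right _ => 0
  end.
Lemma feinvP x : feinv_val x * e == feinv_val x.
Proof. by rewrite /feinv_val; case: excluded_middle_informative => [H|H]; rewrite ?mul0r // -mulrA He. Qed.
Definition feinv x := MkFe (feinvP x).

Lemma femulV (x : Fe) : x != 0 -> feinv x * x = 1.
Proof.
move=> nx; apply: val_inj.
change (feinv_val x * fval x = e).
rewrite /feinv_val; case: excluded_middle_informative => [H|H].
  case: constructive_indefinite_description => y /= Hy.
  by rewrite mulrC mulrA Hy He.
exfalso; apply: H; apply: Hinv; first exact/eqP/(fvalP x).
by apply: contra nx => /eqP h; apply/eqP/val_inj.
Qed.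
Lemma feinv0 : feinv 0 = 0.
Proof.
apply: val_inj; change (feinv_val 0 = 0).
rewrite /feinv_val; case: excluded_middle_informative => [H|//].
exfalso; case: H => y; rewrite /= mul0r => h; by move: Hne; rewrite -h eqxx.
Qed.
HB.instance Definition _ := GRing.ComNzRing_isField.Build Fe femulV feinv0.

Definition Fe_field : fieldType := Fe.
End FeSec.

Section Main.
Variable R : comNzRingType.

Definition fam (s : seq R) : Prop :=
  uniq s /\ (forall x, x \in s -> x != 0 /\ x * x = x) /\
  (forall x y, x \in s -> y \in s -> x != y -> x * y = 0) /\ \sum_(x <- s) x = 1.

Definition prim (s : seq R) : Prop :=
  forall e f, e \in s -> f * f = f -> f * e = f -> f != 0 -> f = e.

Lemma refine_fam s : fam s -> ~ prim s -> exists s', fam s' /\ size s' = (size s).+1.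
Proof.
move=> [us [idem [orth sum1]]] np.
have [e [f [es [ff [fe [f0 nfe]]]]]] : exists e f, e \in s /\ f * f = f /\ f * e = f /\ f != 0 /\ f != e.
  apply: Classical_Prop.NNPP => H; apply: np => e f es ff fe f0.
  apply: Classical_Prop.NNPP => nfe; apply: H; exists e, f; do 4 split => //.
  by apply/eqP.
have ef : e * f = f by rewrite mulrC.
have [e0 ee] := idem e es.
have remP g : g \in rem e s -> g != e /\ g \in s by rewrite mem_rem_uniq // => /andP.
have fg g : g \in rem e s -> f * g = 0.
  by move=> /remP [ge gs]; rewrite -fe -mulrA (orth e g es gs) ?mulr0 // eq_sym.
have efg g : g \in rem e s -> (e - f) * g = 0.
  move=> gr; have [ge gs] := remP g gr.
  by rewrite mulrBl fg // (orth e g es gs) ?subr0 // eq_sym.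
have fef : f * (e - f) = 0 by rewrite mulrBr fe ff subrr.
have ef0 : e - f != 0 by rewrite subr_eq0 eq_sym.
have efe : (e - f) * (e - f) = e - f.
  by rewrite mulrBl !mulrBr ee ef fe ff subrr subr0.
exists [:: f, e - f & rem e s]; split; last first.
  by rewrite /= size_rem // prednK //; case: (s) es.
split.
  rewrite /= rem_uniq // andbT !inE negb_or. apply/andP; split; first apply/andP; first split.
  - apply/eqP => h; move: f0; by rewrite -ff {2}h fef eqxx.
  - by apply/negP => /fg; rewrite ff; apply/eqP.
  - apply/negP => /remP [ge gs]; move: (orth _ _ gs es ge).
    by rewrite mulrBl ee fe; apply/eqP.
split.
  move=> x; rewrite !inE => /orP [/eqP->|/orP [/eqP->|xr]]; first by [].
    by [].
  by apply: idem; case: (remP x xr).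
split.
  move=> x y; rewrite !inE => /orP [/eqP->|/orP [/eqP->|xr]] /orP [/eqP->|/orP [/eqP->|yr]] nxy;
    try by rewrite eqxx in nxy. all: try by [rewrite fef | rewrite fg | rewrite efg | rewrite mulrC fef | rewrite mulrC fg | rewrite mulrC efg].
  by case: (remP x xr) => _ xs; case: (remP y yr) => _ ys; apply: orth.
rewrite !big_cons addrA subrKC.
by rewrite -sum1 (perm_big _ (perm_to_rem es)) big_cons.
Qed.

Lemma fam_clique s : fam s -> (2 <= size s)%N -> cozero_clique s.
Proof.
move=> [us [idem [orth sum1]]] sz.
have other a : a \in s -> exists2 y, y \in s & y != a.
  move=> as_; have : (0 < size (rem a s))%N by rewrite size_rem // -ltnS prednK // (ltn_trans _ sz).
  case Er: (rem a s) => [|y r] //= _; exists y.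
    by have := mem_head y r; rewrite -Er mem_rem_uniq // => /andP [].
  by have := mem_head y r; rewrite -Er mem_rem_uniq // => /andP [].
have W a : a \in s -> Wstar a.
  move=> as_; have [a0 aa] := idem a as_; split; first exact/eqP.
  move=> [b ab]; have [y ys ya] := other a as_.
  have [y0 _] := idem y ys.
  by move: y0; rewrite -[y]mulr1 -ab mulrA (orth y a ys as_ ya) mul0r eqxx.
split; first exact: us.
split; first exact: W.
move=> a b as_ bs ab; split; first exact: W.
split; first exact: W.
split; first exact: ab.
have [a0 aa] := idem a as_; have [b0 bb] := idem b bs.
have nab : a != b by apply/eqP.
split.
  move=> [r h]; move: a0; by rewrite -aa {1}h -mulrA (orth b a bs as_) ?mulr0 ?eqxx // eq_sym.
move=> [r h]; move: b0; by rewrite -bb {1}h -mulrA (orth a b as_ bs) ?mulr0 ?eqxx.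
Qed.

Lemma exists_prim : finite_clique_number R -> exists s, fam s /\ prim s.
Proof.
move=> [N HN]; apply: Classical_Prop.NNPP => H.
have step n : exists s, fam s /\ size s = n.+1.
  elim: n => [|n [s [fs sz]]].
    exists [:: 1]; split => //; split => //; split.
      by move=> x; rewrite inE => /eqP->; rewrite oner_eq0 mulr1.
    split; last by rewrite big_seq1.
    by move=> x y; rewrite !inE => /eqP-> /eqP->; rewrite eqxx.
  have np : ~ prim s by move=> ps; apply: H; exists s.
  by have [s' [fs' sz']] := refine_fam fs np; exists s'; rewrite sz' sz.
have [s [fs sz]] := step N.+1.
have cs : cozero_clique s by apply: fam_clique fs _; rewrite sz.
by have := HN s cs; rewrite sz => /(leq_trans (leqnSn N.+1)); rewrite ltnn.
Qed.

Lemma prim_inv s e : von_neumann_regular R -> fam s -> prim s -> e \in s ->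
  forall x : R, x * e = x -> x != 0 -> exists y : R, x * y = e.
Proof.
move=> vnr fs ps es x xe x0.
have [t ht] := vnr x; rewrite expr2 in ht.
exists t; apply: ps => //.
- by rewrite mulrA [x * t * x]mulrC mulrA -ht.
- by rewrite -mulrA [t * e]mulrC mulrA xe.
- apply: contra x0 => /eqP h; by rewrite ht -mulrA h mulr0.
Qed.
End Main.

Lemma fe_inj (R : comNzRingType) (e : R) (a b : Fe e) : fval a = fval b -> a = b.
Proof. exact: val_inj. Qed.

Unset Implicit Arguments.
Section Final.
Variables (R : comNzRingType) (vnr : von_neumann_regular R) (s : seq R).
Hypotheses (fs : fam s) (ps : prim s).

Definition E (i : 'I_(size s)) : R := nth 0 s i.
Lemma Es i : E i \in s. Proof. exact: mem_nth. Qed.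
Lemma EE i : E i * E i = E i. Proof. by case: fs => _ [h _]; case: (h _ (Es i)). Qed.
Lemma E0 i : E i != 0. Proof. by case: fs => _ [h _]; case: (h _ (Es i)). Qed.
Lemma Einv i : forall x : R, x * E i = x -> x != 0 -> exists y : R, x * y = E i.
Proof. exact: prim_inv vnr fs ps (Es i). Qed.
Lemma Eorth i j : i != j -> E i * E j = 0.
Proof.
move=> ij; case: fs => us [_ [orth _]]; apply: orth; try exact: Es.
by rewrite /E nth_uniq.
Qed.
Lemma Esum : \sum_(i < size s) E i = 1.
Proof. by case: fs => _ [_ [_ <-]]; rewrite (big_nth 0) big_mkord. Qed.
Lemma decomp x : x = \sum_(i < size s) x * E i.
Proof. by rewrite -mulr_sumr Esum mulr1. Qed.

Definition F i : fieldType := Fe_field (EE i) (E0 i) (Einv i).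
Lemma phiP x i : (x * E i) * E i == x * E i.
Proof. by rewrite -mulrA EE. Qed.
Definition phi (x : R) : forall i, F i := fun i => @MkFe R (E i) (x * E i) (phiP x i).

Lemma phi_iso : ring_iso_prod phi.
Proof.
split.
  move=> x y; apply: functional_extensionality_dep => i; apply: fe_inj.
  by rewrite /= mulrDl.
split.
  move=> x y; apply: functional_extensionality_dep => i; apply: fe_inj.
  by rewrite /= mulrACA EE.
split.
  apply: functional_extensionality_dep => i; apply: fe_inj.
  by rewrite /= mul1r.
split.
  move=> x y h; rewrite (decomp x) (decomp y); apply: eq_bigr => i _.
  by have := congr1 (fun g => fval (g i)) h.
move=> g; exists (\sum_(i < size s) fval (g i)).
apply: functional_extensionality_dep => i; apply: fe_inj.
rewrite /= mulr_suml (bigD1 i) //= big1 ?addr0; first exact/eqP/(fvalP (g i)).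
move=> j ji; rewrite -(eqP (fvalP (g j))) -mulrA Eorth ?mulr0 //.
Qed.

Definition Pm i : R -> Prop := fun x => x * E i = 0.

Lemma Pm_prime i : is_prime_ideal (Pm i).
Proof.
rewrite /Pm; split; first split; first by rewrite mul0r.
  split; first by move=> x y hx hy; rewrite mulrDl hx hy addr0.
  by move=> r x hx; rewrite -mulrA hx mulr0.
split; first by rewrite mul1r; apply/eqP; exact: E0.
move=> a b h; case: (eqVneq (a * E i) 0) => ha; [by left|right].
have aE : a * E i * E i = a * E i by rewrite -mulrA EE.
have [y hy] := Einv i (a * E i) aE ha.
have -> : b * E i = (a * b * E i) * (E i * y).
  by rewrite -{1}(EE i) -{1}hy; ring.
by rewrite h mul0r.
Qed.

Lemma Pm_min i : is_minimal_prime (Pm i).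
Proof.
split; first exact: Pm_prime.
move=> Q [[Q0 [QD QM]] [Q1 Qp]] QP x hx.
have hq : Q ((1 - E i) * E i) by rewrite mulrBl mul1r EE subrr.
case: (Qp _ _ hq) => [hq1|hE].
  have -> : x = x * (1 - E i) by rewrite mulrBr mulr1 (hx : x * E i = 0) subr0.
  exact: QM hq1.
have := QP _ hE; rewrite /Pm EE => h; by move: (E0 i); rewrite h eqxx.
Qed.

Lemma Pm_inj i j : same_set (Pm i) (Pm j) -> i = j.
Proof.
move=> h; apply/eqP; apply: Classical_Prop.NNPP => /negP ij.
have : Pm i (E j) by rewrite /Pm Eorth // eq_sym.
move/h; rewrite /Pm EE => hj; by move: (E0 j); rewrite hj eqxx.
Qed.

Lemma Pm_all P : is_minimal_prime P -> exists i, same_set (Pm i) P.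
Proof.
move=> [[[P0 [PD PM]] [P1 Pp]] Pmin].
have [i Pi] : exists i, ~ P (E i).
  apply: Classical_Prop.NNPP => H; apply: P1; rewrite -Esum.
  apply: (big_ind P) => // j _; apply: Classical_Prop.NNPP => nj; apply: H; by exists j.
have sub : forall x, Pm i x -> P x.
  move=> x hx; rewrite (decomp x); apply: (big_ind P) => // j _.
  case: (eqVneq j i) => [->|ji]; first by rewrite (hx : x * E i = 0).
  have : P (E j * E i) by rewrite Eorth.
  case/Pp => [hj|hi]; last by exfalso; apply: Pi.
  exact: PM.
exists i => x; split; first exact: sub.
move=> px; apply: (Pmin (Pm i) (Pm_prime i) sub x px).
Qed.
End Final.

Theorem lemma2p2 (R : comNzRingType) :
  von_neumann_regular R -> finite_clique_number R ->
  exists n : nat, card_Min R n /\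
    exists (F : 'I_n -> fieldType) (phi : R -> forall i : 'I_n, F i),
      ring_iso_prod phi.
Proof.
move=> vnr fcn; have [s [fs ps]] := exists_prim fcn.
exists (size s); split.
  exists (Pm R s); split; first exact: Pm_min R vnr s fs ps.
  split; first exact: Pm_inj R s fs.
  exact: Pm_all R vnr s fs ps.
exists (F R vnr s fs ps), (phi R vnr s fs ps); exact: phi_iso.
Qed.
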